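(* Let $S$ be a Stone relation algebra and $\# : S\to\mathbb{N}\cup\{\infty\}$ a function. Consider the properties: (C1a) $\#\bot=0$; (C1b) $\forall x:\ \#x=0\iff x=\bot$; (C3) $\forall x:\ \#(x^{\smile})=\#x$; (C4a) $\forall x,y:\ \#x+\#y=\#(x\sqcup y)+\#(x\sqcap y)$; (C4b) $\forall x,y:\ x\sqsubseteq y\implies \#x\le\#y$; (C5a) $\forall x,y,z$ with $x$ univalent: $\#(x^{\smile}y\sqcap z)\le\#(xz\sqcap y)$; (C5b) $\forall x,y,z$ with $x$ univalent: $\#(x\sqcap yz^{\smile})\le\#(xz\sqcap y)$; (C5c) $\forall x,y$ with $x$ univalent: $\#(yx)\le\#y$; (C5d) $\forall x,y$ with $x$ univalent: $\#(x\sqcap y\top)\le\#y$; (C5e) $\forall x,y$ with $x$ univalent: $\#(x\sqcap yy^{\smile})\le\#y$; (C6a) $\forall x:\ \#(1\sqcap xx^{\smile})\le\#x$; (C6b) $\forall x:\ \#(1\sqcap x^{\smile}x)\le\#x$; (C7a) $\forall x:\ \#x=\#\top\iff x=\top$; (C7b) $\forall x:\ \#\top\le\#x\iff x=\top$. Then: 1. (C1b) implies (C1a). 2. (C3) and (C5c) together imply (C5a). 3. Each of (C5b) and (C5e) implies (C6a). 4. If (C3) holds, then (C6a) $\iff$ (C6b). 5. If (C3) and (C4b) hold, then (C5a) $\iff$ (C5c). 6. If (C4b) holds, then (C5b) $\iff$ (C5d), and (C5d) implies (C5e). 7. If (C4b) and (C5c) hold, then (C5b), (C5d), (C5e) and (C6a)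 are pairwise equivalent. 8. If (C4b) holds, then $\#x\le\#\top$ for every $x\in S$; in particular (C7a) $\iff$ (C7b). 9. If (C5b) and (C5c) hold, then $\#(xy)=\#x$ for every univalent $x$ and every mapping $y$. 10. If (C3), (C5b) and (C5c) hold, then $\#x=\#1$ for every point $x$. 11. If (C1a) and (C4a) hold, then $\#(x\sqcup y)=\#x+\#y$ whenever $x\sqcap y=\bot$. 12. If (C1a) and (C4a) hold and $X\subseteq S$ is finite and non-empty with $x\sqcap y=\bot$ for all distinct $x,y\in X$, then $\#\bigsqcup X=\sum_{x\in X}\#x$. 13. If (C1a) and (C4a) hold and $X\subseteq S$ is a finite non-empty set of atoms, then $\#\bigsqcup X=\sum_{x\in X}\#x$.
   Context: A Stone relation algebra is a structure $(S,\sqcup,\sqcap,\cdot,\overline{\,\cdot\,},{}^{\smile},\bot,\top,1)$ (write $xy$ for $x\cdot y$, $\overline{x}$ for the pseudocomplement, $x^{\smile}$ for the converse) such that: $(S,\sqcup,\sqcap,\bot,\top)$ is a bounded distributive lattice with order $x\sqsubseteq y\iff x\sqcup y=y$; $x\sqcap y=\bot\iff x\sqsubseteq\overline{y}$; $\overline{x}\sqcup\overline{\overline{x}}=\top$; $\cdot$ is associative with two-sided unit $1$, distributes over $\sqcup$ on both sides, and $\bot$ is a zero of $\cdot$; $x^{\smile\smile}=x$, $(xy)^{\smile}=y^{\smile}x^{\smile}$, $(x\sqcup y)^{\smile}=x^{\smile}\sqcup y^{\smile}$; $\overline{\overline{1}}=1$; $\overline{\overline{xy}}=\overline{\overline{x}}\,\overline{\overline{y}}$;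 $xy\sqcap z\sqsubseteq x(y\sqcap x^{\smile}z)$. $\bigsqcup X$ denotes the join of a finite non-empty set $X$. $x$ is univalent if $x^{\smile}x\sqsubseteq1$, total if $1\sqsubseteq xx^{\smile}$, a mapping if univalent and total, injective if $xx^{\smile}\sqsubseteq1$, surjective if $1\sqsubseteq x^{\smile}x$, a vector if $x\top=x$, a point if it is an injective, surjective vector. An atom is an element $x\neq\bot$ such that $\bot\neq y\sqsubseteq x$ implies $y=x$. Arithmetic in $\mathbb{N}\cup\{\infty\}$ is the usual one with $n+\infty=\infty+n=\infty$, $n\le\infty$. *)

(* Defs.v *)
From Stdlib Require Import List.
Import ListNotations.

Record StoneRA := {
  car :> Type;
  sup : car -> car -> car;
  inf : car -> car -> car;
  comp : car -> car -> car;
  pc : car -> car;              (* pseudocomplement x̄ *)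
  cv : car -> car;              (* converse x˘ *)
  bot : car;
  top : car;
  one : car;
  sup_assoc : forall x y z, sup x (sup y z) = sup (sup x y) z;
  sup_comm : forall x y, sup x y = sup y x;
  sup_idem : forall x, sup x x = x;
  inf_assoc : forall x y z, inf x (inf y z) = inf (inf x y) z;
  inf_comm : forall x y, inf x y = inf y x;
  inf_idem : forall x, inf x x = x;
  sup_absorb : forall x y, sup x (inf x y) = x;
  inf_absorb : forall x y, inf x (sup x y) = x;
  inf_sup_distr : forall x y z, inf x (sup y z) = sup (inf x y) (inf x z);
  sup_bot : forall x, sup bot x = x;
  inf_top : forall x, inf top x = x;
  pc_spec : forall x y, inf x y = bot <-> sup x (pc y) = pc y;
  stone : forall x, sup (pc x) (pc (pc x)) = top;
  comp_assoc : forall x y z, comp x (comp y z) = comp (comp x y) z;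
  comp_one_l : forall x, comp one x = x;
  comp_one_r : forall x, comp x one = x;
  comp_sup_l : forall x y z, comp (sup x y) z = sup (comp x z) (comp y z);
  comp_sup_r : forall x y z, comp x (sup y z) = sup (comp x y) (comp x z);
  comp_bot_l : forall x, comp bot x = bot;
  comp_bot_r : forall x, comp x bot = bot;
  cv_invol : forall x, cv (cv x) = x;
  cv_comp : forall x y, cv (comp x y) = comp (cv y) (cv x);
  cv_sup : forall x y, cv (sup x y) = sup (cv x) (cv y);
  pc_pc_one : pc (pc one) = one;
  pc_pc_comp : forall x y, pc (pc (comp x y)) = comp (pc (pc x)) (pc (pc y));
  dedekind : forall x y z,
    sup (inf (comp x y) z) (comp x (inf y (comp (cv x) z)))
    = comp x (inf y (comp (cv x) z))
}.

Arguments sup {s}. Arguments inf {s}. Arguments comp {s}. Arguments pc {s}.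
Arguments cv {s}. Arguments bot {s}. Arguments top {s}. Arguments one {s}.

Section Defs.
Context {S : StoneRA}.

Definition leS (x y : S) : Prop := sup x y = y.

Definition univalent (x : S) := leS (comp (cv x) x) one.
Definition total (x : S) := leS one (comp x (cv x)).
Definition mapping (x : S) := univalent x /\ total x.
Definition injective (x : S) := leS (comp x (cv x)) one.
Definition surjective (x : S) := leS one (comp (cv x) x).
Definition vector (x : S) := comp x top = x.
Definition point (x : S) := injective x /\ surjective x /\ vector x.
Definition atom (x : S) := x <> bot /\ forall y, y <> bot -> leS y x -> y = x.

(* join of a finite non-empty set given as a duplicate-free non-empty list *)
Definition bigsup (l : list S) : S := fold_right sup bot l.
End Defs.

Inductive enat := Fin (n : nat) | Inf.

Definition eadd (a b : enat) : enat :=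
  match a, b with Fin m, Fin n => Fin (m + n) | _, _ => Inf end.

Definition ele (a b : enat) : Prop :=
  match a, b with
  | Fin m, Fin n => m <= n
  | _, Inf => True
  | Inf, Fin _ => False
  end.

Definition esum {A} (f : A -> enat) (l : list A) : enat :=
  fold_right (fun x acc => eadd (f x) acc) (Fin 0) l.

Section Props.
Context {S : StoneRA} (c : S -> enat).

Definition C1a := c bot = Fin 0.
Definition C1b := forall x, c x = Fin 0 <-> x = bot.
Definition C3 := forall x, c (cv x) = c x.
Definition C4a := forall x y, eadd (c x) (c y) = eadd (c (sup x y)) (c (inf x y)).
Definition C4b := forall x y, leS x y -> ele (c x) (c y).
Definition C5a := forall x y z, univalent x ->
  ele (c (inf (comp (cv x) y) z)) (c (inf (comp x z) y)).
Definition C5b := forall x y z, univalent x ->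
  ele (c (inf x (comp y (cv z)))) (c (inf (comp x z) y)).
Definition C5c := forall x y, univalent x -> ele (c (comp y x)) (c y).
Definition C5d := forall x y, univalent x -> ele (c (inf x (comp y top))) (c y).
Definition C5e := forall x y, univalent x -> ele (c (inf x (comp y (cv y)))) (c y).
Definition C6a := forall x, ele (c (inf one (comp x (cv x)))) (c x).
Definition C6b := forall x, ele (c (inf one (comp (cv x) x))) (c x).
Definition C7a := forall x, c x = c top <-> x = top.
Definition C7b := forall x, ele (c top) (c x) <-> x = top.
End Props.

(* Main.v *)
Require Import Defs.
From Stdlib Require Import List Classical Lia.


Section L.
Context {S : StoneRA}.
Implicit Types x y z w v : S.

Lemma le_refl x : leS x x.
Proof. unfold leS; apply sup_idem. Qed.
Lemma le_antisym x y : leS x y -> leS y x -> x = y.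
Proof. unfold leS; intros H1 H2. rewrite <- H2, sup_comm. exact H1. Qed.
Lemma le_trans x y z : leS x y -> leS y z -> leS x z.
Proof. unfold leS; intros H1 H2. rewrite <- H2, sup_assoc, H1. reflexivity. Qed.
Lemma le_inf_iff x y : leS x y <-> inf x y = x.
Proof. unfold leS; split; intro H.
- rewrite <- H. apply inf_absorb.
- rewrite <- H, sup_comm, inf_comm. apply sup_absorb. Qed.
Lemma inf_le_l x y : leS (inf x y) x.
Proof. apply le_inf_iff. rewrite inf_comm, inf_assoc, inf_idem. reflexivity. Qed.
Lemma inf_le_r x y : leS (inf x y) y.
Proof. rewrite inf_comm. apply inf_le_l. Qed.
Lemma le_inf x y z : leS z x -> leS z y -> leS z (inf x y).
Proof. rewrite !le_inf_iff; intros H1 H2. rewrite inf_assoc, H1, H2. reflexivity. Qed.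
Lemma sup_le_l x y : leS x (sup x y).
Proof. unfold leS. rewrite sup_assoc, sup_idem. reflexivity. Qed.
Lemma sup_le_r x y : leS y (sup x y).
Proof. rewrite sup_comm. apply sup_le_l. Qed.
Lemma le_sup x y z : leS x z -> leS y z -> leS (sup x y) z.
Proof. unfold leS; intros H1 H2. rewrite <- sup_assoc, H2, H1. reflexivity. Qed.
Lemma bot_le x : leS bot x.
Proof. apply sup_bot. Qed.
Lemma inf_top_r x : inf x top = x.
Proof. rewrite inf_comm. apply inf_top. Qed.
Lemma le_top x : leS x top.
Proof. apply le_inf_iff, inf_top_r. Qed.
Lemma inf_bot x : inf x bot = bot.
Proof. rewrite inf_comm. apply le_inf_iff, bot_le. Qed.
Lemma comp_mono_l x y z : leS x y -> leS (comp x z) (comp y z).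
Proof. unfold leS; intros H. rewrite <- comp_sup_l, H. reflexivity. Qed.
Lemma comp_mono_r x y z : leS x y -> leS (comp z x) (comp z y).
Proof. unfold leS; intros H. rewrite <- comp_sup_r, H. reflexivity. Qed.
Lemma comp_mono x y z w : leS x y -> leS z w -> leS (comp x z) (comp y w).
Proof. intros; eapply le_trans. apply comp_mono_l; eauto. apply comp_mono_r; auto. Qed.
Lemma cv_mono x y : leS x y -> leS (cv x) (cv y).
Proof. unfold leS; intros H. rewrite <- cv_sup, H. reflexivity. Qed.
Lemma cv_mono_iff x y : leS (cv x) (cv y) -> leS x y.
Proof. intros H. apply cv_mono in H. rewrite !cv_invol in H. exact H. Qed.
Lemma cv_inf x y : cv (inf x y) = inf (cv x) (cv y).
Proof. apply le_antisym.
- apply le_inf; apply cv_mono; [apply inf_le_l | apply inf_le_r].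
- apply cv_mono_iff. rewrite cv_invol. apply le_inf; apply cv_mono_iff; rewrite cv_invol;
  [apply inf_le_l | apply inf_le_r]. Qed.
Lemma cv_one : cv (@one S) = one.
Proof. transitivity (comp (cv one) (cv (cv (@one S)))).
  rewrite cv_invol, comp_one_r. reflexivity.
  rewrite <- cv_comp, comp_one_r, cv_invol. reflexivity. Qed.
Lemma cv_top : cv (@top S) = top.
Proof. apply le_antisym. apply le_top. apply cv_mono_iff. rewrite cv_invol. apply le_top. Qed.
Lemma top_top : comp (@top S) top = top.
Proof. apply le_antisym. apply le_top. rewrite <- (comp_one_r _ top) at 1.
  apply comp_mono_r, le_top. Qed.
Lemma ded_l x y z : leS (inf (comp x y) z) (comp x (inf y (comp (cv x) z))).
Proof. apply dedekind. Qed.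
Lemma ded_r x y z : leS (inf (comp x y) z) (comp (inf x (comp z (cv y))) y).
Proof. apply cv_mono_iff. rewrite cv_inf, !cv_comp, cv_inf, cv_comp, cv_invol.
  pose proof (ded_l (cv y) (cv x) (cv z)) as H; rewrite cv_invol in H; exact H. Qed.
Lemma univ_id x w v : univalent x ->
  comp (inf w (comp v (cv x))) x = inf (comp w x) v.
Proof. intros U. apply le_antisym.
- apply le_inf. apply comp_mono_l, inf_le_l.
  eapply le_trans. apply comp_mono_l, inf_le_r. rewrite <- comp_assoc.
  rewrite <- (comp_one_r _ v) at 2. apply comp_mono_r, U.
- apply ded_r. Qed.
Lemma univ_one : univalent (@one S).
Proof. unfold univalent. rewrite cv_one, comp_one_l. apply le_refl. Qed.
End L.

Lemma ele_refl a : ele a a.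
Proof. destruct a; simpl; auto. Qed.
Lemma ele_trans a b d : ele a b -> ele b d -> ele a d.
Proof. destruct a, b, d; simpl; auto; try lia; tauto. Qed.
Lemma ele_antisym a b : ele a b -> ele b a -> a = b.
Proof. destruct a, b; simpl; intros; auto; try tauto. f_equal; lia. Qed.
Lemma eadd_0 a : eadd a (Fin 0) = a.
Proof. destruct a; simpl; auto. Qed.


Section M.
Context {S : StoneRA} (c : S -> enat).

Lemma it2 : C3 c -> C5c c -> C5a c.
Proof. intros H3 H5 x y z U.
  rewrite <- H3, cv_inf, cv_comp, cv_invol.
  rewrite <- (univ_id x (cv y) (cv z) U).
  eapply ele_trans. apply H5, U.
  rewrite <- cv_comp, <- cv_inf, H3, inf_comm. apply ele_refl. Qed.

Lemma it3b : C5b c -> C6a c.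
Proof. intros H x. pose proof (H one x x univ_one) as K.
  rewrite comp_one_l, inf_idem in K. exact K. Qed.

Lemma it3e : C5e c -> C6a c.
Proof. intros H x. apply H, univ_one. Qed.

Lemma it4 : C3 c -> (C6a c <-> C6b c).
Proof. intros H3; split; intros H x.
- pose proof (H (cv x)) as K. rewrite cv_invol, H3 in K. exact K.
- pose proof (H (cv x)) as K. rewrite cv_invol, H3 in K. exact K. Qed.

Lemma it5 : C3 c -> C4b c -> (C5a c <-> C5c c).
Proof. intros H3 H4; split; [|apply it2; auto].
  intros H x y U. pose proof (H x (cv y) top U) as K.
  rewrite inf_top_r, <- cv_comp, H3 in K. eapply ele_trans. exact K.
  rewrite <- (H3 y). apply H4, inf_le_r. Qed.

Lemma it6a : C4b c -> C5b c -> C5d c.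
Proof. intros H4 H x y U. pose proof (H x y top U) as K. rewrite cv_top in K.
  eapply ele_trans. exact K. apply H4, inf_le_r. Qed.

Lemma it6b : C4b c -> C5d c -> C5b c.
Proof. intros H4 H x y z U. eapply ele_trans; [|apply (H x (inf (comp x z) y) U)].
  apply H4. apply le_inf. apply inf_le_l.
  rewrite inf_comm. eapply le_trans. apply ded_r. rewrite cv_invol, (inf_comm _ y).
  apply comp_mono_r, le_top. Qed.

Lemma it6c : C4b c -> C5d c -> C5e c.
Proof. intros H4 H x y U. eapply ele_trans; [|apply (H x y U)].
  apply H4. apply le_inf. apply inf_le_l.
  eapply le_trans. apply inf_le_r. apply comp_mono_r, le_top. Qed.

Lemma it7 : C4b c -> C5c c -> C6a c -> C5d c.
Proof. intros H4 H5 H6 x y U. set (w := inf x (comp y top)).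
  assert (Uw : univalent w).
  { unfold univalent. eapply le_trans; [|apply U].
    apply comp_mono. apply cv_mono, inf_le_l. apply inf_le_l. }
  assert (E : w = comp (inf one (comp w (cv w))) w).
  { apply le_antisym.
    - pose proof (ded_r one w w) as K. rewrite comp_one_l, inf_idem in K. exact K.
    - eapply le_trans; [apply comp_mono_l, inf_le_l | rewrite comp_one_l; apply le_refl]. }
  rewrite E. eapply ele_trans. apply H5, Uw.
  eapply ele_trans; [|apply (H6 y)]. apply H4.
  apply le_inf. apply inf_le_l.
  assert (K1 : leS (comp w (cv w)) (comp (comp y top) (cv y))).
  { eapply le_trans. apply comp_mono. apply inf_le_r. apply cv_mono, inf_le_r.
    rewrite cv_comp, cv_top, comp_assoc, <- (comp_assoc _ y top top), top_top.
    apply le_refl. }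
  eapply le_trans. apply le_inf. apply inf_le_l. eapply le_trans. apply inf_le_r. exact K1.
  rewrite inf_comm. eapply le_trans. apply ded_r. rewrite cv_invol, comp_one_l.
  apply comp_mono_l, inf_le_r. Qed.

Lemma it9 : C5b c -> C5c c -> forall x y : S, univalent x -> mapping y ->
             c (comp x y) = c x.
Proof. intros Hb Hc x y U [Uy Ty]. apply ele_antisym. apply Hc, Uy.
  pose proof (Hb x (comp x y) y U) as K. rewrite inf_idem in K.
  assert (E : inf x (comp (comp x y) (cv y)) = x).
  { apply le_inf_iff. rewrite <- comp_assoc. rewrite <- (comp_one_r _ x) at 1.
    apply comp_mono_r, Ty. }
  rewrite E in K. exact K. Qed.

Lemma it10 : C3 c -> C5b c -> C5c c -> forall x : S, point x -> c x = c one.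
Proof. intros H3 Hb Hc x [I [Su _]].
  rewrite <- H3. rewrite <- (comp_one_l _ (cv x)). apply it9; auto.
  apply univ_one. split; unfold univalent, total; rewrite cv_invol; auto. Qed.

Lemma it11 : C1a c -> C4a c -> forall x y : S, inf x y = bot ->
             c (sup x y) = eadd (c x) (c y).
Proof. intros H1 H4 x y E. rewrite H4, E, H1, eadd_0. reflexivity. Qed.

Lemma inf_bigsup (a : S) l : (forall y, In y l -> inf a y = bot) -> inf a (bigsup l) = bot.
Proof. induction l; simpl; intros H. apply inf_bot.
  rewrite inf_sup_distr, H, IHl, sup_idem; auto. Qed.

Lemma it12 : C1a c -> C4a c -> forall X : list S,
             (forall x y, In x X -> In y X -> x <> y -> inf x y = bot) -> NoDup X ->
             c (bigsup X) = esum c X.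
Proof. intros H1 H4. induction X as [|a l IH]; simpl; intros H N. exact H1.
  inversion N; subst. rewrite (it11 H1 H4).
  - rewrite IH. reflexivity. intros; apply H; simpl; auto. auto.
  - apply inf_bigsup. intros y Hy. apply H; simpl; auto. intro; subst; tauto. Qed.

Lemma atoms_disj (x y : S) : atom x -> atom y -> x <> y -> inf x y = bot.
Proof. intros [Nx Ax] [Ny Ay] D. destruct (classic (inf x y = bot)) as [E|E]; auto.
  exfalso. apply D. rewrite <- (Ax _ E (inf_le_l x y)). apply Ay; auto. apply inf_le_r. Qed.
End M.

Theorem mainTheorem3 (S : StoneRA) (c : S -> enat) :
  (* 1 *) (C1b c -> C1a c) /\
  (* 2 *) (C3 c -> C5c c -> C5a c) /\
  (* 3 *) (C5b c -> C6a c) /\ (C5e c -> C6a c) /\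
  (* 4 *) (C3 c -> (C6a c <-> C6b c)) /\
  (* 5 *) (C3 c -> C4b c -> (C5a c <-> C5c c)) /\
  (* 6 *) (C4b c -> (C5b c <-> C5d c) /\ (C5d c -> C5e c)) /\
  (* 7 *) (C4b c -> C5c c ->
             (C5b c <-> C5d c) /\ (C5b c <-> C5e c) /\ (C5b c <-> C6a c) /\
             (C5d c <-> C5e c) /\ (C5d c <-> C6a c) /\ (C5e c <-> C6a c)) /\
  (* 8 *) (C4b c -> (forall x : S, ele (c x) (c top)) /\ (C7a c <-> C7b c)) /\
  (* 9 *) (C5b c -> C5c c -> forall x y : S, univalent x -> mapping y ->
             c (comp x y) = c x) /\
  (* 10 *) (C3 c -> C5b c -> C5c c -> forall x : S, point x -> c x = c one) /\
  (* 11 *) (C1a c -> C4a c -> forall x y : S, inf x y = bot ->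
             c (sup x y) = eadd (c x) (c y)) /\
  (* 12 *) (C1a c -> C4a c -> forall X : list S, X <> nil -> NoDup X ->
             (forall x y, In x X -> In y X -> x <> y -> inf x y = bot) ->
             c (bigsup X) = esum c X) /\
  (* 13 *) (C1a c -> C4a c -> forall X : list S, X <> nil -> NoDup X ->
             (forall x, In x X -> atom x) ->
             c (bigsup X) = esum c X).

Proof.
  split. { intros H. apply H. reflexivity. }
  split. { apply it2. }
  split. { apply it3b. }
  split. { apply it3e. }
  split. { apply it4. }
  split. { apply it5. }
  split. { intros H4; split; [split; [apply it6a|apply it6b]; auto | apply it6c; auto]. }
  split. { intros H4 H5.
    assert (A : C5b c -> C5d c) by (apply it6a; auto).
    assert (B : C5d c -> C5b c) by (apply it6b; auto).
    assert (D : C5d c -> C5e c) by (apply it6c; auto).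
    assert (E : C5e c -> C6a c) by (apply it3e).
    assert (F : C6a c -> C5d c) by (apply it7; auto).
    tauto. }
  split. { intros H4. assert (T : forall x : S, ele (c x) (c top)) by (intros; apply H4, le_top).
    split; auto. split; intros H x; split; intro K.
    - apply H. apply ele_antisym; auto.
    - subst; apply ele_refl.
    - apply H. rewrite K; apply ele_refl.
    - subst; reflexivity. }
  split. { apply it9. }
  split. { apply it10. }
  split. { apply it11. }
  split. { intros H1 H4 X _ N D. apply it12; auto. }
  { intros H1 H4 X _ N A. apply it12; auto. intros; apply atoms_disj; auto. }
Qed.
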